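(* Let $u\in\{\mathrm{fail},\mathrm{succ}\}$, and let $F\subseteq H_u$ and $G\subseteq N$ with $F\subseteq G$. Let $G_{|F|}$ be the set of the $|F|$ tests of $G$ with the smallest values of $\sigma_u^{-1}$ (i.e., appearing earliest in the order $\sigma_u$). Then $$\sum_{j\in G_{|F|}}c_j\le 2\sum_{j\in F}c_j.$$
   Context: Tests $N=\{1,\dots,n\}$ have costs $c_j\ge0$ and probabilities $p_j\in(0,1)$. $\sigma_{\mathrm{fail}},\sigma_{\mathrm{succ}}$ are permutations of $N$ (ties broken arbitrarily) with $c_{\sigma_{\mathrm{fail}}(1)}/(1-p_{\sigma_{\mathrm{fail}}(1)})\le\dots\le c_{\sigma_{\mathrm{fail}}(n)}/(1-p_{\sigma_{\mathrm{fail}}(n)})$ and $c_{\sigma_{\mathrm{succ}}(1)}/p_{\sigma_{\mathrm{succ}}(1)}\le\dots\le c_{\sigma_{\mathrm{succ}}(n)}/p_{\sigma_{\mathrm{succ}}(n)}$. $H_{\mathrm{fail}}=\{j\in N:p_j<\tfrac12\}$ and $H_{\mathrm{succ}}=\{j\in N:p_j\ge\tfrac12\}$. *)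

(* Defs.v *)
From mathcomp Require Import all_boot all_order all_algebra all_fingroup.
Set Implicit Arguments. Unset Strict Implicit. Unset Printing Implicit Defensive.
Import Order.TTheory GRing.Theory Num.Theory.
Local Open Scope ring_scope.

Inductive outcome := fail | succ.

Definition test_ratio (R : realFieldType) (n : nat) (u : outcome)
  (c p : 'I_n -> R) (j : 'I_n) : R :=
  match u with fail => c j / (1 - p j) | succ => c j / p j end.

Definition Hset (R : realFieldType) (n : nat) (u : outcome)
  (p : 'I_n -> R) : {set 'I_n} :=
  match u with
  | fail => [set j | p j < 2^-1]
  | succ => [set j | 2^-1 <= p j]
  end.

(* s : {perm 'I_n} lists the tests in order: s k is the test at position k,
   so (s^-1) j is the position of test j.  s is sorted by key f. *)
Definition sorted_by (R : realFieldType) (n : nat) (f : 'I_n -> R)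
  (s : {perm 'I_n}) : Prop :=
  forall i k : 'I_n, (i <= k)%N -> f (s i) <= f (s k).

Definition first_k (n : nat) (s : {perm 'I_n}) (G : {set 'I_n}) (k : nat)
  : {set 'I_n} :=
  [set j in G | #|[set i in G | (nat_of_ord ((s^-1)%g i) < (s^-1)%g j)%N]| < k]%N.

Definition sigma_u (n : nat) (u : outcome) (sf ss : {perm 'I_n}) :=
  match u with fail => sf | succ => ss end.

(* Main.v *)
Require Import Defs.
From mathcomp Require Import all_boot all_order all_algebra all_fingroup.
From mathcomp Require Import zify lra.
Import Order.TTheory GRing.Theory Num.Theory.
Local Open Scope ring_scope.

Lemma sum_exch (R : realFieldType) (n : nat) (w : 'I_n -> R) (A B : {set 'I_n}) :
  (forall x y, x \in A -> y \in B -> w x <= w y) -> (#|A| <= #|B|)%N ->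
  (forall y, y \in B -> 0 <= w y) ->
  \sum_(x in A) w x <= \sum_(y in B) w y.
Proof.
move=> hle hcard hpos.
have hB0 : 0 <= \sum_(y in B) w y by apply: sumr_ge0 => y /hpos.
have h1 : (\sum_(x in A) w x) * #|B|%:R <= #|A|%:R * \sum_(y in B) w y.
  have -> : (\sum_(x in A) w x) * #|B|%:R = \sum_(x in A) \sum_(y in B) w x.
    rewrite mulr_suml; apply: eq_bigr => x _; by rewrite sumr_const mulr_natr.
  have -> : #|A|%:R * \sum_(y in B) w y = \sum_(x in A) \sum_(y in B) w y.
    by rewrite sumr_const mulr_natl.
  apply: ler_sum => x xA; apply: ler_sum => y yB; exact: hle.
have h2 : #|A|%:R * \sum_(y in B) w y <= #|B|%:R * \sum_(y in B) w y.
  by apply: ler_wpM2r => //; rewrite ler_nat.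
case: (posnP #|B|) => hb.
  have : #|A| = 0%N by move: hcard; rewrite hb; case: #|A|.
  by move/cards0_eq => ->; rewrite big_set0.
have hbR : 0 < (#|B|%:R : R) by rewrite ltr0n.
rewrite -(ler_pM2r hbR) [X in _ <= X]mulrC.
exact: le_trans h1 h2.
Qed.

Lemma main_abs (R : realFieldType) (n : nat) (c w : 'I_n -> R) (s : {perm 'I_n})
  (F G : {set 'I_n}) :
  sorted_by w s -> (forall j, 0 <= c j) -> (forall j, c j <= w j) ->
  (forall j, j \in F -> w j <= 2 * c j) -> F \subset G ->
  \sum_(j in first_k s G #|F|) c j <= 2 * \sum_(j in F) c j.
Proof.
move=> hs hc hcw hwc hFG.
set K := first_k s G #|F|.
pose pos (j : 'I_n) := nat_of_ord ((s^-1)%g j).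
pose cnt (j : 'I_n) := #|[set i in G | (pos i < pos j)%N]|.
have memK : forall j, (j \in K) = (j \in G) && (cnt j < #|F|)%N.
  by move=> j; rewrite inE.
have cntmono : forall x y, (pos x <= pos y)%N -> (cnt x <= cnt y)%N.
  move=> x y hxy; apply: subset_leq_card; apply/subsetP => i.
  rewrite !inE => /andP[-> hi] /=; exact: leq_trans hi hxy.
have sep : forall x y, x \in K -> y \in G -> y \notin K -> (pos x < pos y)%N.
  move=> x y xK yG yK; rewrite ltnNge; apply/negP => hyx.
  have := cntmono _ _ hyx; move: xK yK; rewrite !memK yG /= => /andP[_ h1] h2.
  rewrite -leqNgt in h2; lia.
have wle : forall x y, x \in K -> y \in G -> y \notin K -> w x <= w y.
  move=> x y xK yG yK.
  have := hs ((s^-1)%g x) ((s^-1)%g y) (ltnW (sep _ _ xK yG yK)).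
  by rewrite !permKV.
have cntinj : {in G &, injective cnt}.
  have strict : forall x y, x \in G -> (pos x < pos y)%N -> (cnt x < cnt y)%N.
    move=> x y xG hxy.
    have xnot : x \notin [set i in G | (pos i < pos x)%N] by rewrite inE ltnn andbF.
    have : (#|x |: [set i in G | (pos i < pos x)%N]| <= cnt y)%N.
      apply: subset_leq_card; apply/subsetP => i; rewrite !inE.
      case/orP => [/eqP -> | /andP[-> hi]]; first by rewrite xG.
      exact: ltn_trans hi hxy.
    by rewrite cardsU1 xnot.
  move=> x y xG yG hxy.
  case: (ltngtP (pos x) (pos y)) => h.
  - by have := strict _ _ xG h; rewrite hxy ltnn.
  - by have := strict _ _ yG h; rewrite hxy ltnn.
  - apply: (@perm_inj _ (s^-1)%g); exact: val_inj.
have cardK : (#|K| <= #|F|)%N.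
  rewrite cardE -(size_map cnt) -(size_iota 0 #|F|).
  apply: uniq_leq_size.
    rewrite map_inj_in_uniq ?enum_uniq // => x y; rewrite !mem_enum => xK yK.
    move: xK yK; rewrite !memK => /andP[xG _] /andP[yG _]; exact: cntinj.
  move=> m /mapP[j]; rewrite mem_enum memK => /andP[_ hj] ->.
  by rewrite mem_iota.
set A := K :\: F.
set B := F :\: K.
have hAB : \sum_(x in A) w x <= \sum_(y in B) w y.
  apply: sum_exch.
  - move=> x y /setDP[xK _] /setDP[yF yK].
    apply: wle => //; exact: (subsetP hFG).
  - rewrite !cardsD setIC.
    have := subset_leq_card (subsetIl K F); have := subset_leq_card (subsetIr K F).
    move: cardK; lia.
  - move=> y _; exact: le_trans (hc y) (hcw y).
have hA : \sum_(x in A) c x <= \sum_(x in A) w x by apply: ler_sum => x _.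
have hB : \sum_(x in B) w x <= 2 * \sum_(x in B) c x.
  rewrite mulr_sumr; apply: ler_sum => x /setDP[xF _]; exact: hwc.
have hI : 0 <= \sum_(x in F :&: K) c x by apply: sumr_ge0 => x _.
rewrite (@big_setID _ _ _ _ K F) (@big_setID _ _ _ _ F K) /= setIC -/A -/B.
lra.
Qed.

Theorem lemma4 (R : realFieldType) (n : nat) (c p : 'I_n -> R)
  (sf ss : {perm 'I_n})
  (hc : forall j, 0 <= c j)
  (hp : forall j, 0 < p j < 1)
  (hsf : sorted_by (@test_ratio R n fail c p) sf)
  (hss : sorted_by (@test_ratio R n succ c p) ss)
  (u : outcome) (F G : {set 'I_n})
  (hFH : F \subset @Hset R n u p) (hFG : F \subset G) :
  \sum_(j in first_k (sigma_u u sf ss) G #|F|) c j <= 2 * \sum_(j in F) c j.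
Proof.
apply: (@main_abs R n c (@test_ratio R n u c p)) => //.
- by case: u hFH.
- move=> j; have /andP[h0 h1] := hp j; have := hc j.
  case: u hFH => _ /=.
  + have hq : 0 < 1 - p j by rewrite subr_gt0.
    rewrite ler_pdivlMr //; nra.
  + rewrite ler_pdivlMr //; nra.
- move=> j jF; have /andP[h0 h1] := hp j; have := hc j.
  have := subsetP hFH j jF.
  case: u hFH => _ /=; rewrite inE => hpj.
  + have hq : 0 < 1 - p j by rewrite subr_gt0.
    rewrite ler_pdivrMr //; nra.
  + rewrite ler_pdivrMr //; nra.
Qed.
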